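(* Let $G$ be a graph with girth at least $15$ and minimum degree $\delta(G)\ge 2$. Then $G\notin\mathcal U$.
   Context: All graphs are finite and simple. A set $P\subseteq V(G)$ is an open packing if no two distinct vertices of $P$ have a common neighbor; it is maximal if maximal under inclusion among open packings. $\rho^o(G)$ is the maximum size of an open packing and $\rho^o_L(G)$ the minimum size of a maximal open packing; $\mathcal U$ is the class of graphs with $\rho^o_L(G)=\rho^o(G)$. The girth is the length of a shortest cycle ($\infty$ if acyclic). *)

(* Defs.v *)
From mathcomp Require Import all_boot.
Set Implicit Arguments. Unset Strict Implicit. Unset Printing Implicit Defensive.

Definition simple_graph (T : finType) (e : rel T) : Prop :=
  symmetric e /\ irreflexive e.

Definition nbhd (T : finType) (e : rel T) (v : T) : {set T} := [set w | e v w].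

Definition min_deg_ge (T : finType) (e : rel T) (k : nat) : Prop :=
  forall v : T, k <= #|nbhd e v|.

Definition girth_ge (T : finType) (e : rel T) (g : nat) : Prop :=
  forall s : seq T, uniq s -> cycle e s -> 3 <= size s -> g <= size s.

Definition open_packing (T : finType) (e : rel T) (P : {set T}) : bool :=
  [forall u in P, forall v in P, (u != v) ==> [forall w, ~~ (e u w && e v w)]].

Definition maximal_open_packing (T : finType) (e : rel T) (P : {set T}) : bool :=
  open_packing e P &&
  [forall Q : {set T}, (open_packing e Q && (P \subset Q)) ==> (Q == P)].

Definition rho_o (T : finType) (e : rel T) : nat :=
  \max_(P : {set T} | open_packing e P) #|P|.

(* rho^o_L(G): minimum size of a maximal open packing
   (a maximal open packing always exists, and has size <= #|T|, so the
    default value #|T| of the iterated minimum is harmless). *)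
Definition rho_o_L (T : finType) (e : rel T) : nat :=
  \big[minn/#|T|]_(P : {set T} | maximal_open_packing e P) #|P|.

Definition in_U (T : finType) (e : rel T) : Prop := rho_o_L e = rho_o e.

(* Main.v *)
Require Import Defs.
From mathcomp Require Import all_boot zify.
Set Implicit Arguments. Unset Strict Implicit.

Definition walk (T : eqType) (e : rel T) (f : nat -> T) (L : nat) : Prop :=
  (forall i, i < L -> e (f i) (f i.+1)) /\ (forall i, i.+2 <= L -> f i != f i.+2).

Lemma rep (T : finType) (e : rel T) g f L : simple_graph e -> girth_ge e g ->
  walk e f L -> forall d i, 0 < d -> i + d <= L -> f i = f (i + d) -> g <= d.
Proof.
move=> [esym eirr] gir [fe fnb] d.
elim: d.+1 {-2}d (ltnSn d) => // n IH {}d ltd i d0 idL fid.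
set s := map f (iota i d).
have ns : forall k, k < d -> nth (f 0) s k = f (i + k).
  by move=> k kd; rewrite (nth_map 0) ?size_iota // nth_iota.
have ss : size s = d by rewrite size_map size_iota.
case: (boolP (uniq s)) => [us|].
  have d3 : 3 <= d.
    case: d d0 idL fid {IH ltd ns ss s us} => // [[|[|d]]] //= _.
      move=> iL; have -> : i + 1 = i.+1 by lia.
      by move=> fi; have := fe i ltac:(lia); rewrite -fi eirr.
    move=> iL fi; have := fnb i ltac:(lia).
    have E : i + 2 = i.+2 by lia.
    by rewrite E in fi; rewrite -fi eqxx. 
  rewrite -ss; apply: gir => //; last by rewrite ss.
  rewrite (cycle_path (f 0)) -nth_last ss.
  apply/(pathP (f 0)) => k; rewrite ss => kd.
  case: k kd => [|k] kd /=.
    rewrite ns ?ns //; last by lia.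
    have -> : f (i + 0) = f (i + d.-1).+1 by rewrite addn0 fid; congr f; lia.
    apply: fe; lia.
  rewrite ns ?ns; try lia.
  have -> : i + k.+1 = (i + k).+1 by lia.
  apply: fe; lia.
case/(uniqPn (f 0)) => k1 [k2 [k12 k2s]]; rewrite ss in k2s.
rewrite ns ?ns; try lia.
move=> fk.
have := IH (k2 - k1) ltac:(lia) (i + k1) ltac:(lia) ltac:(lia).
have -> : i + k1 + (k2 - k1) = i + k2 by lia.
move=> H; have := H fk; lia.
Qed.

Lemma uw (T : finType) (e : rel T) g : simple_graph e -> girth_ge e g ->
  forall L1 L2 f h, walk e f L1 -> walk e h L2 -> f 0 = h 0 -> f L1 = h L2 ->
  L1 + L2 < g -> L1 = L2.
Proof.
move=> sg gir L1; elim: L1 => [|n IH] L2 f h wf wh f0 fL lg.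
  case: L2 wh fL lg => // m wh fL lg.
  have := rep sg gir wh (i:=0) (d:=m.+1) erefl (leqnn _).
  rewrite add0n -fL f0 => /(_ erefl); lia.
case: L2 wh fL lg => [|m] wh fL lg.
  have := rep sg gir wf (i:=0) (d:=n.+1) erefl (leqnn _).
  rewrite add0n fL f0 => /(_ erefl); lia.
case: sg => esym eirr; case: wf => fe fnb; case: wh => he hnb.
case: (eqVneq (f 1) (h 1)) => f1.
  suff : n = m by move->.
  apply: (IH m (fun i => f i.+1) (fun i => h i.+1)) => //; try lia.
    split=> i iL; [apply: fe|apply: fnb]; lia.
  split=> i iL; [apply: he|apply: hnb]; lia.
pose c i := if i <= n.+1 then f (n.+1 - i) else h (i - n.+1).
have wc : walk e c (n.+1 + m.+1).
  split=> i iL; rewrite /c.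
    case: (leqP i.+1 n.+1) => H1.
      rewrite (leq_trans (leqnSn i) H1) esym.
      have -> : n.+1 - i = (n.+1 - i.+1).+1 by lia.
      apply: fe; lia.
    case: (leqP i n.+1) => H2.
      have E : i = n.+1 by lia.
      rewrite E subnn subSnn f0; apply: he; lia.
    have -> : i.+1 - n.+1 = (i - n.+1).+1 by lia.
    apply: he; lia.
  case: (leqP i.+2 n.+1) => H1.
    rewrite (leq_trans _ H1) //; last by lia.
    have -> : n.+1 - i = (n.+1 - i.+2).+2 by lia.
    rewrite eq_sym; apply: fnb; lia.
  case: (leqP i n.+1) => H2.
    case: (eqVneq i n) => [E|Ein].
      rewrite E.
      have -> : n.+2 - n.+1 = 1 by lia.
      by have -> : n.+1 - n = 1 by lia.
    have E : i = n.+1 by lia.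
    rewrite E subnn f0.
    have -> : n.+3 - n.+1 = 2 by lia.
    apply: hnb; lia.
  idtac.
  have -> : i.+2 - n.+1 = (i - n.+1).+2 by lia.
  apply: hnb; lia.
have := rep (conj esym eirr) gir wc (i:=0) (d:=n.+1 + m.+1) erefl (leqnn _).
rewrite /c add0n leq0n subn0. have -> : (n.+1 + m.+1 <= n.+1) = false by lia.
have -> : n.+1 + m.+1 - n.+1 = m.+1 by lia.
move=> /(_ fL); lia.
Qed.

Fixpoint nbl (T : eqType) (s : seq T) : bool :=
  if s is x :: s' then (if s' is _ :: z :: _ then x != z else true) && nbl s' else true.

Lemma nblP (T : eqType) (s : seq T) x0 : nbl s -> forall i, i.+2 < size s -> nth x0 s i != nth x0 s i.+2.
Proof.
elim: s => //= x s IH /andP[H1 H2] [|i] /=.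
  by case: s H1 {IH H2} => // y [|z s].
move=> Hi; exact: IH.
Qed.

Lemma lwalk (T : eqType) (e : rel T) a s : path e a s -> nbl (a :: s) ->
  walk e (fun i => nth a (a :: s) i) (size s).
Proof.
move=> /(pathP a) pe nb; split=> i iL; first exact: pe.
apply: nblP => //=; lia.
Qed.

Lemma luniq (T : finType) (e : rel T) g a s1 s2 : simple_graph e -> girth_ge e g ->
  path e a s1 -> path e a s2 -> nbl (a :: s1) -> nbl (a :: s2) ->
  last a s1 = last a s2 -> size s1 + size s2 < g -> size s1 = size s2.
Proof.
move=> sg gir p1 p2 n1 n2 l12 lt.
apply: (uw sg gir (lwalk p1 n1) (lwalk p2 n2)) => //.
have := nth_last a (a :: s1); have := nth_last a (a :: s2); rewrite /= => -> ->.
exact: l12.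
Qed.

Lemma noconf (T : finType) (e : rel T) a s b c : simple_graph e -> girth_ge e 15 ->
  path e a s -> nbl (a :: s) -> size s != 2 -> size s < 13 -> last a s = b ->
  a != b -> e a c -> e b c -> False.
Proof.
move=> sg gir ps ns s2 s13 lb ab ac bc.
have := @luniq T e 15 a s [:: c; b] sg gir ps.
case: (sg) => esym _.
rewrite /= ac ab lb /= esym bc => /(_ erefl ns erefl erefl).
move=> H; have := H ltac:(lia); move/eqP: s2; lia.
Qed.

Definition other (T : finType) (e : rel T) (v u : T) : T :=
  odflt v [pick w | e v w && (w != u)].

Lemma otherP (T : finType) (e : rel T) v u : min_deg_ge e 2 ->
  e v (other e v u) /\ other e v u != u.
Proof.
move=> md; rewrite /other; case: pickP => [w /andP[] //|H].
exfalso; have := md v; rewrite (cardsD1 u) => H2.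
have : 0 < #|nbhd e v :\ u| by case: (u \in nbhd e v) H2 => /=; lia.
case/card_gt0P => w; rewrite !inE => /andP[wu evw].
by have := H w; rewrite evw wu.
Qed.

Definition Sset (T : finType) (e : rel T) (y p : T) : {set T} :=
  [set t | [exists m, exists w, [&& e y m, m != p, e m w, w != y &
     t == other e (other e w m) w]]].

Lemma SsetP (T : finType) (e : rel T) y p t : min_deg_ge e 2 -> t \in Sset e y p ->
  exists m w r, [/\ [/\ e y m, m != p, e m w & w != y],
     [/\ e w r, r != m, e r t & t != w] & (r = other e w m /\ t = other e r w)].
Proof.
move=> md; rewrite inE => /existsP[m /existsP[w /and5P[ym mp mw wy /eqP tE]]].
exists m, w, (other e w m).
have [h1 h2] := otherP (other e w m) w md; have [h3 h4] := otherP w m md.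
by rewrite -tE in h1 h2.
Qed.

Ltac solp := rewrite /=; repeat (apply/andP; split); try (by []); try (by rewrite eq_sym).

Definition ok (T : finType) (e : rel T) a b := forall c, a != b -> e a c -> e b c -> False.

Lemma ok_sym (T : finType) (e : rel T) a b : ok e a b -> ok e b a.
Proof. by move=> H c ba bc ac; apply: (H c) => //; rewrite eq_sym. Qed.

Lemma L_same (T : finType) (e : rel T) y p t1 t2 : simple_graph e -> girth_ge e 15 ->
  min_deg_ge e 2 -> t1 \in Sset e y p -> t2 \in Sset e y p -> ok e t1 t2.
Proof.
move=> sg gir md /(SsetP md)[m1 [w1 [r1 [[y1 m1p m1w w1y] [w1r r1m r1t t1w] [r1E t1E]]]]].
move=> /(SsetP md)[m2 [w2 [r2 [[y2 m2p m2w w2y] [w2r r2m r2t t2w] [r2E t2E]]]]].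
have esym := sg.1.
move=> c t12 t1c t2c.
case: (eqVneq m1 m2) => [Em|nm].
  subst m2.
  case: (eqVneq w1 w2) => [Ew|nw].
    subst w2; subst r1 r2; by rewrite t1E t2E eqxx in t12.
  apply: (@noconf T e t1 [:: r1; w1; m1; w2; r2; t2] t2 c) => //.
    by solp; rewrite esym.
  by solp.
apply: (@noconf T e t1 [:: r1; w1; m1; y; m2; w2; r2; t2] t2 c) => //.
  by solp; rewrite esym.
by solp.
Qed.

Lemma L_cross (T : finType) (e : rel T) x y p z q t1 t2 : simple_graph e -> girth_ge e 15 ->
  min_deg_ge e 2 -> e x p -> e p y -> e x q -> e q z -> y != x -> p != q -> z != x ->
  t1 \in Sset e y p -> t2 \in Sset e z q -> ok e t1 t2.
Proof.
move=> sg gir md xp py xq qz yx pq zx.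
move=> /(SsetP md)[m1 [w1 [r1 [[y1 m1p m1w w1y] [w1r r1m r1t t1w] _]]]].
move=> /(SsetP md)[m2 [w2 [r2 [[y2 m2p m2w w2y] [w2r r2m r2t t2w] _]]]].
have esym := sg.1.
move=> c t12 t1c t2c.
apply: (@noconf T e t1 [:: r1; w1; m1; y; p; x; q; z; m2; w2; r2; t2] t2 c) => //.
  by solp; rewrite esym.
by solp.
Qed.

Lemma L_x (T : finType) (e : rel T) x y p t : simple_graph e -> girth_ge e 15 ->
  min_deg_ge e 2 -> e x p -> e p y -> y != x -> t \in Sset e y p -> ok e x t.
Proof.
move=> sg gir md xp py yx.
move=> /(SsetP md)[m1 [w1 [r1 [[y1 m1p m1w w1y] [w1r r1m r1t t1w] _]]]].
move=> c xt xc tc.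
apply: (@noconf T e x [:: p; y; m1; w1; r1; t] t c) => //.
  by solp.
by solp.
Qed.

Lemma opP (T : finType) (e : rel T) (P : {set T}) :
  reflect (forall u v, u \in P -> v \in P -> ok e u v) (open_packing e P).
Proof.
apply: (iffP idP).
  move=> /forall_inP H u v uP vP w uv euw evw.
  have := H u uP => /forall_inP /(_ v vP) /implyP /(_ uv) /forallP /(_ w).
  by rewrite euw evw.
move=> H; apply/forall_inP => u uP; apply/forall_inP => v vP; apply/implyP => uv.
apply/forallP => w; apply/negP => /andP[]; exact: H.
Qed.

Lemma ext_max (T : finType) (e : rel T) (Q : {set T}) : open_packing e Q ->
  exists2 M, maximal_open_packing e M & Q \subset M.
Proof.
move=> oQ.
pose PP : pred {set T} := fun P => open_packing e P && (Q \subset P).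
have PQ : PP Q by rewrite /PP oQ subxx.
case: (@arg_maxnP _ Q PP (fun P : {set T} => #|P|) PQ) => M /andP[oM QM] Mmax.
exists M => //; rewrite /maximal_open_packing oM /=.
apply/forallP => R; apply/implyP => /andP[oR MR].
have := Mmax R; rewrite /PP oR (subset_trans QM MR) => /(_ erefl) RM.
by rewrite eq_sym eqEcard MR; apply: RM.
Qed.

Lemma bigmin_le (I : finType) (P : pred I) (F : I -> nat) k i0 :
  P i0 -> \big[minn/k]_(i | P i) F i <= F i0.
Proof.
move=> Pi0; rewrite unlock.
have : i0 \in index_enum I by rewrite mem_index_enum.
elim: (index_enum I) => //= x s IH.
rewrite in_cons => /orP[/eqP <-|/IH H].
  by rewrite Pi0 geq_minl.
case: (P x) => //; exact: leq_trans (geq_minr _ _) H.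
Qed.

Lemma ok_refl (T : finType) (e : rel T) a : ok e a a.
Proof. by move=> c; rewrite eqxx. Qed.

Lemma keyL (T : finType) (e : rel T) (M1 : {set T}) x y p : simple_graph e ->
  min_deg_ge e 2 -> open_packing e M1 -> x \in M1 -> e x p ->
  Sset e y p \subset M1 -> forall u, u \in M1 -> u != x -> ok e y u.
Proof.
move=> [esym _] md /opP oM xM xp SM u uM ux c yu yc uc.
case: (eqVneq c p) => [Ec|cp].
  subst c; exact: (oM u x uM xM p ux uc xp).
set r := other e u c; set t := other e r u.
have [ur rc] := otherP u c md; have [rt tu] := otherP r u md.
have tS : t \in Sset e y p.
  rewrite inE; apply/existsP; exists c; apply/existsP; exists u.
  by rewrite yc cp esym uc (eq_sym u y) yu eqxx.
have tM := subsetP SM t tS.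
apply: (oM u t uM tM r) => //; first by rewrite eq_sym.
by rewrite esym.
Qed.

Theorem lemma2 (T : finType) (e : rel T) :
  simple_graph e -> 0 < #|T| ->
  girth_ge e 15 -> min_deg_ge e 2 ->
  ~ in_U e.
Proof.
move=> sg hT gir md.
have esym := sg.1.
case/card_gt0P: hT => x _.
set p := other e x x; have [xp _] := otherP x x md.
set q := other e x p; have [xq qp] := otherP x p md.
set y := other e p x; have [py yx] := otherP p x md.
set z := other e q x; have [qz zx] := otherP q x md.
have pq : p != q by rewrite eq_sym.
set S := Sset e y p :|: Sset e z q.
have oS : open_packing e (x |: S).
  apply/opP => u v; rewrite !in_setU1 !in_setU.
  case/orP=> [/eqP->|/orP[uY|uZ]]; case/orP=> [/eqP->|/orP[vY|vZ]].
  - exact: ok_refl.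
  - exact: L_x vY.
  - exact: L_x vZ.
  - exact/ok_sym/(L_x sg gir md xp py yx uY).
  - exact: L_same uY vY.
  - exact: (L_cross sg gir md xp py xq qz yx pq zx uY vZ).
  - exact/ok_sym/(L_x sg gir md xq qz zx uZ).
  - exact/ok_sym/(L_cross sg gir md xp py xq qz yx pq zx vY uZ).
  - exact: L_same uZ vZ.
case: (ext_max oS) => M1 maxM1 sub.
have oM1 : open_packing e M1 by case/andP: maxM1.
have xM : x \in M1 by apply: (subsetP sub); rewrite in_setU1 eqxx.
have SM1 : Sset e y p \subset M1.
  apply/subsetP => t tS; apply: (subsetP sub); by rewrite in_setU1 in_setU tS orbT.
have SM2 : Sset e z q \subset M1.
  apply/subsetP => t tS; apply: (subsetP sub); by rewrite in_setU1 in_setU tS !orbT.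
have keyy := keyL sg md oM1 xM xp SM1.
have keyz := keyL sg md oM1 xM xq SM2.
have yM : y \notin M1.
  apply/negP => yM; have /opP oM := oM1.
  by apply: (oM x y xM yM p) => //; [rewrite eq_sym | rewrite esym].
have zM : z \notin M1.
  apply/negP => zM; have /opP oM := oM1.
  by apply: (oM x z xM zM q) => //; [rewrite eq_sym | rewrite esym].
have yz : y != z.
  apply/negP => /eqP Eyz.
  have := @luniq T e 15 y [:: p; x; q; y] [::] sg gir.
  have qy : e q y by rewrite Eyz.
  rewrite /= esym py esym xp xq qy (eq_sym x y) yx pq /=.
  by move=> /(_ erefl erefl erefl erefl erefl erefl).
have okyz : ok e y z.
  move=> c _ yc zc.
  apply: (@noconf T e y [:: p; x; q; z] z c) => //.
    by solp; rewrite esym.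
  by solp.
set M2 := y |: (z |: (M1 :\ x)).
have oM2 : open_packing e M2.
  have /opP oM := oM1.
  apply/opP => u v; rewrite !in_setU1 !in_setD1.
  case/orP=> [/eqP->|/orP[/eqP->|/andP[ux uM]]]; case/orP=> [/eqP->|/orP[/eqP->|/andP[vx vM]]].
  - exact: ok_refl.
  - exact: okyz.
  - exact: keyy.
  - exact: ok_sym.
  - exact: ok_refl.
  - exact: keyz.
  - exact/ok_sym/keyy.
  - exact/ok_sym/keyz.
  - exact: oM.
have cM2 : #|M2| = #|M1|.+1.
  rewrite /M2 cardsU1 cardsU1 (cardsD1 x M1) xM in_setU1 in_setD1 (negbTE yz).
  by rewrite (negbTE yM) andbF in_setD1 (negbTE zM) andbF.
rewrite /in_U => E.
have h1 : rho_o_L e <= #|M1| by apply: bigmin_le.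
have h2 : #|M2| <= rho_o e by apply: (@leq_bigmax_cond _ (fun P => open_packing e P)).
move: h1 h2; rewrite E cM2; move: (rho_o e) (#|M1|) => a b.
by move=> h1 h2; have := leq_trans h2 h1; rewrite ltnn.
Qed.
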